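(* Let $A=(\Sigma,q,N,\delta)$ be a simple LQCA with $|N|=r\ge2$. Then every column $U_A(\cdot,c)$, $c\in\mathcal C_A$, has norm $1$ if and only if every $q$-cycle in the weighted de Bruijn graph $G_A$ has weight $1$.
   Context: A linear quantum cellular automaton (LQCA) is a tuple $A=(\Sigma,q,N,\delta)$ where $\Sigma$ is a finite nonempty set of states, $N=(a_1,\dots,a_r)$ is a strictly increasing sequence of integers, $\delta:\Sigma^r\to\mathbb C^\Sigma$ satisfies $\|\delta(w)\|>0$ for all $w$, and $q\in\Sigma$ satisfies $[\delta(q,\dots,q)](x)=1$ if $x=q$ and $0$ otherwise. It is simple if $a_r-a_1=r-1$. A configuration is a map $c:\mathbb Z\to\Sigma$ with $c_i\ne q$ for only finitely many $i$; $\mathcal C_A$ is the set of configurations. With $c_{i+N}=(c_{i+a_1},\dots,c_{i+a_r})$, $U_A(d,c)=\prod_{i\in\mathbb Z}[\delta(c_{i+N})](d_i)$, and $U_A(\cdot,c)$ is the column $d\mapsto U_A(d,c)$ with norm $\sqrt{\sum_d|U_A(d,c)|^2}$. The graph $G_A=(V,E,w)$ has vertex set $V=\Sigma^{r-1}$ (words of length $r-1$), edge set $E=\{(xz,zy):x,y\in\Sigma,z\in\Sigma^{r-2}\}$, and weight $w((xz,zy))=\|\delta(xzy)\|$. A path $(v_0,\dots,v_k)$ has weight $\prod_{i=0}^{k-1}w((v_i,v_{i+1}))$; it is a cycle if $k>0$ and $v_0=v_k$, and a $q$-cycle if moreover $v_0=q^{r-1}$. *)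

(* Defs.v *)
(* Complex amplitudes live in an arbitrary numeric closed
   field C (e.g. the complex numbers). *)
From Stdlib Require Import ClassicalEpsilon.
From Stdlib Require List.
From HB Require Import structures.
From mathcomp Require Import all_boot all_order all_algebra.
Set Implicit Arguments. Unset Strict Implicit. Unset Printing Implicit Defensive.
Import Order.TTheory GRing.Theory Num.Theory.
Local Open Scope ring_scope.

Section LQCA.
Variables (C : numClosedFieldType) (Sigma : finType).

Definition vnorm (v : Sigma -> C) : C := sqrtC (\sum_(x : Sigma) `|v x| ^+ 2).

(* A = (Sigma, q, N, delta) is an LQCA with r = size N; delta is applied to
   words of length r (represented as seq Sigma of size r). *)
Definition is_LQCA (q : Sigma) (N : seq int) (delta : seq Sigma -> Sigma -> C) : Prop :=
  [/\ (0 < size N)%N, sorted <%R N,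
      (forall w : seq Sigma, size w = size N -> 0 < vnorm (delta w)) &
      (forall x : Sigma, delta (nseq (size N) q) x = (x == q)%:R)].

Definition simple_nbhd (N : seq int) : Prop :=
  last 0 N - head 0 N = (size N)%:Z - 1.

Definition is_config (q : Sigma) (c : int -> Sigma) : Prop :=
  exists s : seq int, forall i : int, c i != q -> i \in s.

Definition window (N : seq int) (c : int -> Sigma) (i : int) : seq Sigma :=
  map (fun a => c (i + a)) N.

Definition iprod_is (f : int -> C) (v : C) : Prop :=
  exists s : seq int, [/\ uniq s, (forall i, i \notin s -> f i = 1) &
                          \prod_(i <- s) f i = v].
Definition iprod (f : int -> C) : C := epsilon (inhabits 0) (iprod_is f).

Definition U (N : seq int) (delta : seq Sigma -> Sigma -> C)
    (d c : int -> Sigma) : C :=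
  iprod (fun i => delta (window N c i) (d i)).

Definition csum_is (q : Sigma) (g : (int -> Sigma) -> C) (v : C) : Prop :=
  exists S : list (int -> Sigma),
    [/\ List.NoDup S, (forall d, List.In d S -> is_config q d),
        (forall d, is_config q d -> g d != 0 -> List.In d S) &
        \sum_(d <- S) g d = v].
Definition csum (q : Sigma) (g : (int -> Sigma) -> C) : C :=
  epsilon (inhabits 0) (csum_is q g).

Definition col_norm (q : Sigma) (N : seq int) (delta : seq Sigma -> Sigma -> C)
    (c : int -> Sigma) : C :=
  sqrtC (csum q (fun d => `|U N delta d c| ^+ 2)).

(* The weighted de Bruijn graph G_A: vertices are words of length r-1,
   edges (xz, zy) with weight ||delta(xzy)||. *)
Definition is_edge (r : nat) (u v : seq Sigma) : Prop :=
  [/\ size u = r.-1, size v = r.-1 &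
      exists (x y : Sigma) (z : seq Sigma), u = x :: z /\ v = rcons z y].

(* for an edge (xz, zy): xzy = x :: zy = head u :: v *)
Definition edge_weight (q : Sigma) (delta : seq Sigma -> Sigma -> C)
    (u v : seq Sigma) : C := vnorm (delta (head q u :: v)).

(* a path (v0, v1, ..., vk) is given by v0 and the list [v1; ...; vk] *)
Fixpoint is_path (r : nat) (v0 : seq Sigma) (vs : seq (seq Sigma)) : Prop :=
  match vs with
  | [::] => size v0 = r.-1
  | v :: vs' => is_edge r v0 v /\ is_path r v vs'
  end.

Fixpoint path_weight (q : Sigma) (delta : seq Sigma -> Sigma -> C)
    (v0 : seq Sigma) (vs : seq (seq Sigma)) : C :=
  match vs with
  | [::] => 1
  | v :: vs' => edge_weight q delta v0 v * path_weight q delta v vs'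
  end.

Definition is_qcycle (r : nat) (q : Sigma) (vs : seq (seq Sigma)) : Prop :=
  [/\ is_path r (nseq r.-1 q) vs, vs <> [::] & last (nseq r.-1 q) vs = nseq r.-1 q].

End LQCA.

(* Main.v *)
Require Import Defs.
From Stdlib Require Import ClassicalEpsilon FunctionalExtensionality Classical.
From Stdlib Require List Permutation.
From HB Require Import structures.
From mathcomp Require Import all_boot all_order all_algebra zify.
Set Implicit Arguments. Unset Strict Implicit. Unset Printing Implicit Defensive.
Import Order.TTheory GRing.Theory Num.Theory.
Local Open Scope ring_scope.

Section Gen.
Variable C : numClosedFieldType.

Lemma big_perm_list (T : Type) (g : T -> C) l l' :
  Permutation.Permutation l l' -> \sum_(x <- l) g x = \sum_(x <- l') g x.
Proof.
elim=> //= [x l1 l2 _ IH | x y l0 | l1 l2 l3 _ H1 _ H2].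
- by rewrite !big_cons IH.
- by rewrite !big_cons addrCA.
- by rewrite H1 H2.
Qed.

Lemma sum_filter_nz (T : Type) (g : T -> C) l :
  \sum_(x <- l) g x = \sum_(x <- List.filter (fun x => g x != 0) l) g x.
Proof.
elim: l => [|x l IH] /=; first by rewrite !big_nil.
rewrite big_cons; case: (eqVneq (g x) 0) => [->|nz] /=; first by rewrite add0r.
by rewrite big_cons IH.
Qed.

Lemma csum_unique (Sigma : finType) (q : Sigma) (g : (int -> Sigma) -> C) v :
  csum_is q g v -> csum q g = v.
Proof.
move=> Hv.
have H : csum_is q g (csum q g) by apply: epsilon_spec; exists v.
case: H => S [nd1 cf1 cv1 <-]; case: Hv => S' [nd2 cf2 cv2 <-].
rewrite (sum_filter_nz g S) (sum_filter_nz g S'); apply: big_perm_list.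
apply: Permutation.NoDup_Permutation; try apply: List.NoDup_filter => //.
move=> x; rewrite !List.filter_In; split=> [[inS nz]|[inS nz]]; split=> //.
- by apply: cv2 => //; apply: cf1.
- by apply: cv1 => //; apply: cf2.
Qed.

Lemma iprod_unique (f : int -> C) v : iprod_is f v -> iprod f = v.
Proof.
move=> Hv.
have H : iprod_is f (iprod f) by apply: epsilon_spec; exists v.
have E : forall t, (forall i, i \notin t -> f i = 1) ->
    \prod_(i <- t) f i = \prod_(i <- [seq i <- t | f i != 1]) f i.
  move=> t _; rewrite big_filter [RHS]big_mkcond; apply: eq_bigr => i _.
  by case: (eqVneq (f i) 1).
case: H => s [u1 h1 <-]; case: Hv => s' [u2 h2 <-].
rewrite (E s h1) (E s' h2); apply: perm_big; apply: uniq_perm; try exact: filter_uniq.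
move=> i; rewrite !mem_filter; case: (eqVneq (f i) 1) => //= nz.
have -> : i \in s by apply/negPn/negP => /h1 E1; rewrite E1 eqxx in nz.
by apply/esym/negPn/negP => /h2 E1; rewrite E1 eqxx in nz.
Qed.

Lemma In_mem (T : eqType) (x : T) l : List.In x l -> x \in l.
Proof. elim: l => //= y l IH [->|/IH H]; by rewrite inE ?eqxx ?H ?orbT. Qed.

Lemma mem_In (T : eqType) (x : T) l : x \in l -> List.In x l.
Proof. elim: l => //= y l IH; rewrite inE => /orP[/eqP->|/IH]; by [left|right]. Qed.

Lemma NoDup_map_uniq (T : eqType) (U : Type) (f : T -> U) l :
  injective f -> uniq l -> List.NoDup (map f l).
Proof.
move=> inj; elim: l => [|x l IH] /=; first by constructor.
case/andP=> xl ul; constructor; last exact: IH.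
case/List.in_map_iff=> y [/inj fy iny]; subst y.
by rewrite (In_mem iny) in xl.
Qed.
End Gen.

Section Seg.
Variables (Sigma : finType) (q : Sigma).

Fixpoint seg (c : int -> Sigma) (j : int) (n : nat) : seq Sigma :=
  if n is n'.+1 then c j :: seg c (j + 1) n' else [::].
Fixpoint iseg (a : int) (n : nat) : seq int :=
  if n is n'.+1 then a :: iseg (a + 1) n' else [::].

Lemma window_iseg a n c i : window (iseg a n) c i = seg c (i + a) n.
Proof. by elim: n a i => //= n IH a i; rewrite IH addrA. Qed.

Lemma size_seg c j n : size (seg c j n) = n.
Proof. by elim: n j => //= n IH j; rewrite IH. Qed.

Lemma seg_rcons c j n : seg c j n.+1 = rcons (seg c j n) (c (j + n%:Z)).
Proof.
elim: n j => [|n IH] j; first by rewrite /= addr0.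
change (c j :: seg c (j+1) n.+1 = rcons (c j :: seg c (j+1) n) (c (j + n.+1%:Z))).
rewrite IH /=; do 3 f_equal; lia.
Qed.

Lemma seg_nth c j n k : (k < n)%N -> nth q (seg c j n) k = c (j + k%:Z).
Proof.
elim: n j k => // n IH j [|k] /= lt; first by rewrite addr0.
rewrite IH //; f_equal; lia.
Qed.

Lemma seg_q c j n : (forall k, (k < n)%N -> c (j + k%:Z) = q) -> seg c j n = nseq n q.
Proof.
elim: n j => //= n IH j H.
have := H 0%N erefl; rewrite addr0 => ->; rewrite IH // => k lt.
by rewrite -(H k.+1) //; f_equal; lia.
Qed.

Lemma sorted_iseg (x : int) s : sorted <%R (x :: s) ->
  (size s)%:Z <= last x s - x /\ (last x s - x = (size s)%:Z -> x :: s = iseg x (size s).+1).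
Proof.
elim: s x => [|y s IH] x /=.
  by move=> _; rewrite subrr; split.
case/andP=> xy sy; have [IH1 IH2] := IH y sy; split; first lia.
move=> E; have Ey : y = x + 1 by lia.
rewrite IH2; last lia. by rewrite Ey.
Qed.

Lemma N_form (N : seq int) : sorted <%R N -> simple_nbhd N -> (0 < size N)%N ->
  N = iseg (head 0 N) (size N).
Proof.
case: N => [|x s] // so; rewrite /simple_nbhd /= => E _.
by apply: (sorted_iseg so).2; lia.
Qed.
End Seg.

Section Col.
Variables (C : numClosedFieldType) (Sigma : finType) (q : Sigma)
  (delta : seq Sigma -> Sigma -> C) (a : int) (r : nat).
Hypothesis Hq : forall x, delta (nseq r q) x = (x == q)%:R.

Definition ext (L : int) (m : nat) (t : {ffun 'I_m -> Sigma}) : int -> Sigma :=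
  fun i => if L <= i then oapp t q (insub (absz (i - L))) else q.

Lemma ext_in L m t (k : 'I_m) : ext L t (L + k%:Z) = t k.
Proof.
rewrite /ext lerDl lez_nat /=.
have -> : L + k%:Z - L = k%:Z by rewrite addrC addKr.
by rewrite (valK k).
Qed.

Lemma ext_out L m (t : {ffun 'I_m -> Sigma}) i : (i < L) || (L + m%:Z <= i) -> ext L t i = q.
Proof.
rewrite /ext; case: (boolP (L <= i)) => // Li /orP[|] h; first lia.
by rewrite insubN //= -leqNgt; lia.
Qed.

Definition R (L : int) (m : nat) := [seq L + k%:Z | k <- iota 0 m].

Lemma mem_R L m i : (i \in R L m) = (L <= i) && (i < L + m%:Z).
Proof.
apply/mapP/andP => [[k]|[h1 h2]].
  rewrite mem_iota => kin ->; lia.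
exists (absz (i - L)); last lia.
rewrite mem_iota; lia.
Qed.

Lemma uniq_R L m : uniq (R L m).
Proof.
rewrite map_inj_uniq ?iota_uniq // => x y /addrI; lia.
Qed.

Definition outside (L : int) (m : nat) (i : int) := (i < L) || (L + m%:Z <= i).

Lemma U_gen (c d : int -> Sigma) L m :
  is_config q d -> (forall i, outside L m i -> seg c (i + a) r = nseq r q) ->
  exists rest : seq int, [/\ forall i, i \in rest -> outside L m i,
    forall i, outside L m i -> d i != q -> i \in rest &
    U (iseg a r) delta d c =
      (\prod_(k < m) delta (seg c (L + k%:Z + a) r) (d (L + k%:Z))) *
      \prod_(i <- rest) (d i == q)%:R].
Proof.
move=> [sd Hsd] Hout.
have outR : forall i, outside L m i = (i \notin R L m).
  move=> i; rewrite mem_R /outside; lia.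
exists [seq i <- undup sd | i \notin R L m]; split.
- by move=> i; rewrite mem_filter outR => /andP[].
- move=> i oi nq; rewrite mem_filter -outR oi mem_undup /=; exact: Hsd.
rewrite /U; apply: iprod_unique.
exists (R L m ++ [seq i <- undup sd | i \notin R L m]); split.
- rewrite cat_uniq uniq_R filter_uniq ?undup_uniq // andbT /=.
  by apply/hasPn => i; rewrite mem_filter => /andP[].
- move=> i; rewrite mem_cat negb_or => /andP[nR nrest].
  rewrite window_iseg Hout ?outR // Hq.
  have -> : d i = q.
    apply/eqP/negPn/negP => nq; move: nrest; rewrite mem_filter nR mem_undup /=.
    by rewrite Hsd.
  by rewrite eqxx.
rewrite big_cat /=; congr (_ * _).
  rewrite /R big_map.
  have := big_mkord (fun _ => true) (fun k : nat => delta (seg c (L + k%:Z + a) r) (d (L + k%:Z))).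
  rewrite /index_iota => <-; rewrite subn0.
  by apply: eq_bigr => k _; rewrite window_iseg.
apply: eq_big_seq => i; rewrite mem_filter => /andP[nR _].
by rewrite window_iseg Hout ?outR // Hq.
Qed.

Lemma U_in (c d : int -> Sigma) L m :
  is_config q d -> (forall i, outside L m i -> seg c (i + a) r = nseq r q) ->
  (forall i, outside L m i -> d i = q) ->
  U (iseg a r) delta d c =
      \prod_(k < m) delta (seg c (L + k%:Z + a) r) (d (L + k%:Z)).
Proof.
move=> cd Hout Hd; have [rest [r1 r2 ->]] := U_gen cd Hout.
suff -> : \prod_(i <- rest) (d i == q)%:R = 1 :> C by rewrite mulr1.
by apply: big1_seq => i /andP[_ /r1 /Hd ->]; rewrite eqxx.
Qed.

Lemma U_zero (c d : int -> Sigma) L m :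
  is_config q d -> (forall i, outside L m i -> seg c (i + a) r = nseq r q) ->
  (exists i, outside L m i /\ d i != q) -> U (iseg a r) delta d c = 0.
Proof.
move=> cd Hout [j [oj nj]]; have [rest [r1 r2 ->]] := U_gen cd Hout.
suff -> : \prod_(i <- rest) (d i == q)%:R = 0 :> C by rewrite mulr0.
apply/eqP; rewrite prodf_seq_eq0; apply/hasP; exists j; first exact: r2.
by rewrite (negbTE nj) eqxx.
Qed.

Lemma vnorm_ge0 (v : Sigma -> C) : 0 <= vnorm v.
Proof. by rewrite /vnorm sqrtC_ge0 sumr_ge0 // => x _; rewrite exprn_ge0. Qed.

Lemma csum_val (c : int -> Sigma) L m :
  (forall i, outside L m i -> seg c (i + a) r = nseq r q) ->
  csum q (fun d => `|U (iseg a r) delta d c| ^+ 2) =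
  \prod_(k < m) vnorm (delta (seg c (L + k%:Z + a) r)) ^+ 2.
Proof.
move=> Hout.
have extinj : injective (@ext L m).
  by move=> t1 t2 E; apply/ffunP => k; rewrite -!(ext_in L) E.
have extcf : forall t, is_config q (@ext L m t).
  move=> t; exists (R L m) => i; apply: contraR; rewrite mem_R => H.
  by rewrite ext_out ?eqxx //; lia.
apply: csum_unique.
exists (map (@ext L m) (enum {ffun 'I_m -> Sigma})); split.
- by apply: NoDup_map_uniq => //; apply: enum_uniq.
- by move=> d /List.in_map_iff [t [<- _]].
- move=> d cd nz.
  case: (classic (exists i, outside L m i /\ d i != q)) => [Hex|Hnex].
    by rewrite (U_zero cd Hout Hex) normr0 expr0n /= eqxx in nz.
  have Hd : forall i, outside L m i -> d i = q.
    move=> i oi; apply/eqP/negPn/negP => nq; apply: Hnex; by exists i.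
  apply/List.in_map_iff; exists [ffun k => d (L + (val k)%:Z)]; split; last first.
    by apply: mem_In; rewrite mem_enum.
  apply: functional_extensionality => i.
  case: (boolP (outside L m i)) => oi; first by rewrite ext_out // Hd.
  have lt : (absz (i - L) < m)%N by rewrite /outside in oi; lia.
  have -> : i = L + (nat_of_ord (Ordinal lt))%:Z by rewrite /outside in oi; rewrite /=; lia.
  by rewrite ext_in ffunE.
rewrite big_map big_enum /=.
under [RHS]eq_bigr do rewrite sqrtCK.
rewrite bigA_distr_bigA /=; apply: eq_bigr => t _.
rewrite (U_in (extcf t) Hout); last by move=> i oi; rewrite ext_out.
rewrite normr_prod -prodrXl; apply: eq_bigr => k _.
by rewrite ext_in.
Qed.

Lemma col_val (c : int -> Sigma) L m :
  (forall i, outside L m i -> seg c (i + a) r = nseq r q) ->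
  col_norm q (iseg a r) delta c =
  \prod_(k < m) vnorm (delta (seg c (L + k%:Z + a) r)).
Proof.
move=> Hout; rewrite /col_norm (csum_val Hout) prodrXl sqrCK //.
by apply: prodr_ge0 => k _; apply: vnorm_ge0.
Qed.
End Col.

Section Paths.
Variables (C : numClosedFieldType) (Sigma : finType) (q : Sigma)
  (delta : seq Sigma -> Sigma -> C) (r : nat).
Hypothesis r2 : (2 <= r)%N.

Fixpoint segs (c : int -> Sigma) (k : int) (K : nat) : seq (seq Sigma) :=
  if K is K'.+1 then seg c (k + 1) r.-1 :: segs c (k + 1) K' else [::].

Lemma Er : exists r'', r.-1 = r''.+1.
Proof. by exists r.-2; lia. Qed.

Lemma path_segs c k K : is_path r (seg c k r.-1) (segs c k K).
Proof.
elim: K k => [|K IH] k /=; first by rewrite size_seg.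
split; last exact: IH.
have [r'' E] := Er.
rewrite /is_edge E !size_seg; split => //.
exists (c k), (c (k + 1 + r''%:Z)), (seg c (k + 1) r''); split => //.
by rewrite seg_rcons.
Qed.

Lemma pw_segs c k K : path_weight q delta (seg c k r.-1) (segs c k K) =
  \prod_(t < K) vnorm (delta (seg c (k + t%:Z) r)).
Proof.
elim: K k => [|K IH] k; first by rewrite big_ord0.
have [r'' E] := Er.
have H : head q (seg c k r.-1) :: seg c (k + 1) r.-1 = seg c k r.
  by have -> : r = r''.+2 by lia.
rewrite /= IH big_ord_recl addr0 /edge_weight H; congr (_ * _).
apply: eq_bigr => i _; rewrite lift0; congr (vnorm (delta (seg c _ r))); lia.
Qed.

Lemma last_segs c k K : last (seg c k r.-1) (segs c k K) = seg c (k + K%:Z) r.-1.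
Proof.
elim: K k => [|K IH] k /=; first by rewrite addr0.
by rewrite IH; congr (seg c _ _); lia.
Qed.

Lemma path_is_segs c vs k : is_path r (seg c k r.-1) vs ->
  (forall j, (j < size vs)%N -> last q (nth [::] vs j) = c (k + j%:Z + r.-1%:Z)) ->
  vs = segs c k (size vs).
Proof.
elim: vs k => [|v vs IH] k //= [[_ _ [x [y [z [E1 E2]]]]] Hp] Hl.
have Hy := Hl 0%N erefl; rewrite /= E2 last_rcons addr0 in Hy.
have [r'' E] := Er.
rewrite E /= in E1; case: E1 => _ Ez.
have Ev : v = seg c (k + 1) r.-1.
  by rewrite E2 E seg_rcons -Ez Hy; congr (rcons _ (c _)); lia.
rewrite Ev; congr (_ :: _); apply: IH; first by rewrite -Ev.
by move=> j lt; rewrite (Hl j.+1) //; congr (c _); lia.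
Qed.
End Paths.

Lemma bnd (s : seq int) : exists B : nat, forall i, i \in s -> - B%:Z < i < B%:Z.
Proof.
elim: s => [|x s [B IH]]; first by exists 0%N.
exists (B + absz x).+1 => i; rewrite inE => /orP[/eqP->|/IH]; lia.
Qed.

Unset Implicit Arguments.
Theorem lemma4 (C : numClosedFieldType) (Sigma : finType) (q : Sigma)
    (N : seq int) (delta : seq Sigma -> Sigma -> C) :
  is_LQCA q N delta -> simple_nbhd N -> (2 <= size N)%N ->
  ((forall c : int -> Sigma, is_config q c -> col_norm q N delta c = 1) <->
   (forall vs : seq (seq Sigma), is_qcycle (size N) q vs ->
      path_weight q delta (nseq (size N).-1 q) vs = 1)).
Proof.
case=> [Npos Nsort _ Hq] Hsimp.
have EN := N_form Nsort Hsimp Npos.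
move: Hq EN; set r := size N; set a := head 0 N; clearbody r a => Hq EN r2.
subst N.
split.
- move=> Hcol vs [Hp Hne Hlast].
  pose c := fun t : int => if t < r.-1%:Z then q else last q (nth [::] vs (absz t - r.-1)).
  have c0 : seg c 0 r.-1 = nseq r.-1 q.
    by apply: seg_q => k lt; rewrite /c ifT //; lia.
  rewrite -c0 in Hp Hlast *.
  have Evs : vs = segs r c 0 (size vs).
    apply: (@path_is_segs _ q _ r2 _ _ _ Hp) => j lt; rewrite /c ifF; last lia.
    by congr (last q (nth _ _ _)); lia.
  set K := size vs in Evs.
  rewrite Evs (pw_segs q delta r2).
  rewrite Evs (last_segs r2) in Hlast.
  have cq : forall t, (t < r.-1%:Z) || (K%:Z <= t) -> c t = q.
    move=> t h.
    case: (boolP (t < r.-1%:Z)) => h1; first by rewrite /c ifT.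
    case: (boolP (t < K%:Z + r.-1%:Z)) => h2.
      have lt : (absz (t - K%:Z) < r.-1)%N by lia.
      have := seg_nth q c (0 + K%:Z) lt.
      rewrite Hlast c0 nth_nseq lt => E; rewrite E; congr (c _); lia.
    rewrite /c ifF; last lia.
    by rewrite nth_default //; rewrite /K; lia.
  have Hc : is_config q c.
    exists [seq (k%:Z) | k <- iota 0 K] => i nq.
    case: (boolP ((i < r.-1%:Z) || (K%:Z <= i))) => h; first by rewrite cq ?eqxx in nq.
    apply/mapP; exists (absz i); last lia.
    rewrite mem_iota; lia.
  have Hout : forall i, outside (- a) K i -> seg c (i + a) r = nseq r q.
    move=> i oi; apply: seg_q => k lt; apply: cq; rewrite /outside in oi; lia.
  have := Hcol c Hc; rewrite (col_val Hq Hout) => E; apply: (etrans _ E).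
  by apply: eq_bigr => k _; congr (vnorm (delta (seg c _ r))); lia.
- move=> Hcyc c [s Hs].
  have [B HB] := bnd s.
  have cq : forall t, (t <= - B%:Z) || (B%:Z <= t) -> c t = q.
    by move=> t h; apply/eqP/negPn/negP => /Hs /HB; lia.
  pose j0 := - B%:Z - r.-1%:Z.
  pose K := (2 * B + r.-1)%N.
  have Hs0 : seg c j0 r.-1 = nseq r.-1 q.
    by apply: seg_q => k lt; apply: cq; rewrite /j0; lia.
  have H1 := Hcyc (segs r c j0 K).
  rewrite -Hs0 (pw_segs q delta r2) in H1.
  have H2 : \prod_(t < K) vnorm (delta (seg c (j0 + t%:Z) r)) = 1.
    apply: H1; split.
    + by rewrite -Hs0; exact: (path_segs r2 c j0 K).
    + have -> : K = K.-1.+1 by rewrite /K; lia.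
      by [].
    + rewrite -{1}Hs0 (last_segs r2); apply: seg_q => k lt; apply: cq; rewrite /j0 /K; lia.
  have Hout : forall i, outside (j0 - a) K i -> seg c (i + a) r = nseq r q.
    move=> i oi; apply: seg_q => k lt; apply: cq; rewrite /outside /j0 /K in oi *; lia.
  rewrite (col_val Hq Hout); apply: (etrans _ H2).
  by apply: eq_bigr => k _; congr (vnorm (delta (seg c _ r))); lia.
Qed.
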